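(* Let $n$ be a positive integer, $b_0,\dots,b_{n-1},\beta_0,\dots,\beta_{n-1}\in\mathbb R$, and \[ \widetilde\Delta(z)=z^n+\sum_{k=0}^{n-1}b_kz^k+e^{-z}\sum_{k=0}^{n-1}\beta_kz^k,\quad z\in\mathbb C. \] Then $0$ is a root of multiplicity $2n$ of $\widetilde\Delta$ if and only if, for every $k\in\{0,\dots,n-1\}$, \[ b_k=(-1)^{n-k}\frac{n!}{k!}\binom{2n-k-1}{n-1},\qquad \beta_k=(-1)^{n-1}\frac{(2n-k-1)!}{k!\,(n-k-1)!}. \]
   Context: A root $z_0$ of $\widetilde\Delta$ has multiplicity $2n$ when $\widetilde\Delta^{(k)}(z_0)=0$ for $k=0,\dots,2n-1$ (multiplicity can be at most $2n$ for this quasipolynomial). *)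

(* Defs.v *)
From HB Require Import structures.
From mathcomp Require Import all_boot all_order all_algebra.
From mathcomp Require Import all_classical all_reals all_analysis.
From mathcomp Require Import complex.
Set Implicit Arguments. Unset Strict Implicit. Unset Printing Implicit Defensive.
Import Order.TTheory GRing.Theory Num.Theory.
Import numFieldNormedType.Exports.
Local Open Scope ring_scope.
Local Open Scope complex_scope.

Definition cexp (R : realType) (z : R[i]) : R[i] :=
  (expR (@complex.Re R z))%:C * ((cos (@complex.Im R z))%:C + 'i * (sin (@complex.Im R z))%:C).

Definition Deltat (R : realType) (n : nat) (b beta : nat -> R) (z : R[i]) : R[i] :=
  z ^+ n + \sum_(k < n) (b k)%:C * z ^+ k
  + cexp (- z) * \sum_(k < n) (beta k)%:C * z ^+ k.

(* z0 is a root of f of multiplicity (at least) m: the complex derivatives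
   f^(k)(z0) vanish for k = 0, ..., m-1.  derive1n is the iterated complex
   derivative (limit of difference quotients over h in R[i]). *)
Definition root_of_mult (K : numFieldType) (f : K -> K) (z0 : K) (m : nat) : Prop :=
  forall k : nat, (k < m)%N -> derive1n k f z0 = 0.

(* Main.v *)
Require Import Defs.
From HB Require Import structures.
From mathcomp Require Import all_boot all_order all_algebra.
From mathcomp Require Import all_classical all_reals all_analysis.
From mathcomp Require Import complex.
From mathcomp Require Import ring lra zify.
Import Order.TTheory GRing.Theory Num.Theory.
Import numFieldNormedType.Exports.
Local Open Scope ring_scope.
Section Alg.
Context {K : numFieldType}.
Implicit Types a d e g : nat -> K.

Definition fdiff a : nat -> K := fun i => a i.+1 - a i.
Definition Dn k a := iter k fdiff a.

Lemma DnS k a i : Dn k.+1 a i = Dn k a i.+1 - Dn k a i.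
Proof. by []. Qed.

Lemma DnSr k a : Dn k.+1 a = Dn k (fdiff a).
Proof. exact: iterSr. Qed.

Lemma DnB k a a' i : Dn k (fun j => a j - a' j) i = Dn k a i - Dn k a' i.
Proof.
elim: k i => [//|k IH] i; rewrite !DnS !IH; ring.
Qed.

Lemma DnZ k c a i : Dn k (fun j => c * a j) i = c * Dn k a i.
Proof.
elim: k i => [//|k IH] i; rewrite !DnS !IH; ring.
Qed.

Lemma Dn_supp n a : (forall i, (n <= i)%N -> a i = 0) ->
  forall k i, (n <= i)%N -> Dn k a i = 0.
Proof.
move=> Ha; elim=> [|k IH] i Hi; first exact: Ha.
by rewrite DnS !IH ?subr0 // (leq_trans Hi).
Qed.

Lemma Dn_inv n : forall e, (forall i, (i < n)%N -> Dn i e 0 = 0) ->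
  forall j, (j < n)%N -> e j = 0.
Proof.
elim: n => [//|n IH] e He.
have Hd : forall j, (j < n)%N -> fdiff e j = 0.
  apply: IH => i Hi; rewrite -DnSr; exact: He.
elim=> [_|j IHj Hj]; first exact: (He 0%N).
have : fdiff e j = 0 by apply: Hd.
rewrite /fdiff IHj ?(ltnW Hj) // subr0 => ->. by [].
Qed.

Lemma Dn_const g : (forall j, fdiff g j = 0) -> forall j t, g j = g (j + t)%N.
Proof.
move=> Hg j; elim=> [|t IH]; first by rewrite addn0.
by rewrite IH addnS; apply/eqP; rewrite eq_sym -subr_eq0; apply/eqP; apply: Hg.
Qed.

Lemma Dn_uniq n d : (forall i, (n <= i)%N -> d i = 0) ->
  (forall m, (n <= m < 2 * n)%N -> Dn m d 0 = 0) -> forall j, d j = 0.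
Proof.
move=> Hs Hm.
have He : forall j, Dn n d j = 0.
  move=> j; case: (ltnP j n) => Hj; last exact: (Dn_supp _ _ Hs).
  apply: (Dn_inv n (Dn n d) _ j Hj) => i Hi.
  rewrite /Dn -iterD; apply: Hm; apply/andP; split; first exact: leq_addl.
  by rewrite mul2n -addnn ltn_add2r.
suff H : forall k, (k <= n)%N -> forall j, Dn (n - k) d j = 0.
  by move=> j; have := H n (leqnn n) j; rewrite subnn.
elim=> [_|k IH Hk] j; first by rewrite subn0.
have Hfd : forall j, fdiff (Dn (n - k.+1) d) j = 0.
  move=> i; have := IH (ltnW Hk) i.
  by rewrite -[in X in X -> _](subnSK Hk).
rewrite (Dn_const _ Hfd j n); apply: (Dn_supp _ _ Hs); exact: leq_addl.
Qed.

Lemma Dn_binom N n m i : (i + m <= N)%N ->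
  Dn m (fun j => ('C(N - j, n))%:R) i =
  if (m <= n)%N then (-1) ^+ m * ('C(N - m - i, n - m))%:R else 0.
Proof.
elim: m i => [|m IH] i Hi; first by rewrite mul1r subn0 subn0 leq0n.
rewrite DnS (IH i.+1) ?(IH i); [|lia|lia].
case: (ltngtP m n) => Hmn.
- have E1 : (N - m - i.+1 = N - m.+1 - i)%N by lia.
  have E2 : (N - m - i = (N - m.+1 - i).+1)%N by lia.
  have E3 : (n - m = (n - m.+1).+1)%N by lia.
  rewrite E1 E2 E3 binS natrD exprS; ring.
- by rewrite subrr.
- by rewrite Hmn !subnn !bin0 subrr.
Qed.

End Alg.
Section Alg2.
Context {K : numFieldType}.
Variable n : nat.
Hypothesis n_gt0 : (0 < n)%N.

Definition astar (i : nat) : K :=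
  (-1) ^+ (n - 1) * (n`!)%:R * ('C(2 * n - 1 - i, n))%:R.
Definition pstar (m : nat) : K :=
  if (m < n)%N then (-1) ^+ (n - m) * ((n`!)%:R / (m`!)%:R) * ('C(2 * n - m - 1, n - 1))%:R
  else (m == n)%:R.

Lemma sign_sq m : (-1) ^+ m * (-1) ^+ m = 1 :> K.
Proof. by rewrite -exprD addnn -mul2n exprM sqrrN expr1n expr1n. Qed.

Lemma fact_neq0 m : (m`!)%:R != 0 :> K.
Proof. by rewrite pnatr_eq0 -lt0n fact_gt0. Qed.

Lemma astar_supp i : (n <= i)%N -> astar i = 0.
Proof. by move=> Hi; rewrite /astar bin_small ?mulr0 //; lia. Qed.

Lemma Dn_astar m : (m < 2 * n)%N -> Dn m astar 0 =
  (-1) ^+ (n - 1) * (n`!)%:R *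
   (if (m <= n)%N then (-1) ^+ m * ('C(2 * n - 1 - m - 0, n - m))%:R else 0).
Proof.
move=> Hm; rewrite -Dn_binom; last lia.
rewrite -DnZ; congr (Dn _ _ _).
Qed.

Lemma exist_star m : (m < 2 * n)%N -> (m`!)%:R * pstar m + Dn m astar 0 = 0.
Proof.
move=> Hm; rewrite Dn_astar // /pstar subn0.
case: (ltngtP m n) => Hmn.
- idtac.
  have [t Ht] : exists t, n = (m + t.+1)%N by exists (n - m).-1; lia.
  have E1 : (n - m = t.+1)%N by lia.
  have E2 : (n - 1 = m + t)%N by lia.
  have E3 : (2 * n - 1 - m = 2 * n - m - 1)%N by lia.
  have E4 : 'C(2 * n - m - 1, n - m) = 'C(2 * n - m - 1, n - 1).
    rewrite -bin_sub; last lia. congr 'C(_, _); lia.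
  rewrite E3 E4 E1 E2 exprD exprS.
  have := fact_neq0 m; set f := (m`!)%:R; set g := (n`!)%:R => Hf.
  set c := ('C(_, _))%:R.
  have Hs := sign_sq m.
  have -> : f * (-1 * (-1) ^+ t * (g / f) * c) = - ((-1) ^+ t * g * c).
    by field.
  have -> : (-1) ^+ m * (-1) ^+ t * g * ((-1) ^+ m * c) =
            ((-1) ^+ m * (-1) ^+ m) * ((-1) ^+ t * g * c) by ring.
  by rewrite Hs mul1r addNr.
- by rewrite mulr0 mulr0 addr0.
- rewrite Hmn subnn bin0 mulr1.
  have [t Ht] : exists t, n = t.+1 by exists n.-1; lia.
  rewrite Ht subSS subn0 exprS.
  have Hs := sign_sq t.
  transitivity ((t.+1`!)%:R * (1 - ((-1) ^+ t * (-1) ^+ t)) : K); first ring.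
  by rewrite Hs subrr mulr0.
Qed.

Lemma uniq_star (pm a : nat -> K) :
  (forall i, (n <= i)%N -> a i = 0) ->
  (forall m, (n <= m)%N -> pm m = pstar m) ->
  (forall m, (m < 2 * n)%N -> (m`!)%:R * pm m + Dn m a 0 = 0) ->
  (forall i, a i = astar i) /\ (forall m, (m < n)%N -> pm m = pstar m).
Proof.
move=> Ha Hp Hc.
have Hd : forall j, a j - astar j = 0.
  apply: (Dn_uniq n).
    by move=> i Hi; rewrite Ha // astar_supp // subrr.
  move=> m /andP[H1 H2]; rewrite DnB.
  have := Hc m H2; have := exist_star m H2; rewrite Hp // => E1 E2.
  have -> : Dn m a 0 = - ((m`!)%:R * pstar m) by apply/eqP; rewrite -subr_eq0 opprK addrC E2.
  have -> : Dn m astar 0 = - ((m`!)%:R * pstar m) by apply/eqP; rewrite -subr_eq0 opprK addrC E1.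
  by rewrite subrr.
have Haa : forall i, a i = astar i by move=> i; apply/eqP; rewrite -subr_eq0 Hd.
split => // m Hm.
have Hm2 : (m < 2 * n)%N by lia.
have := Hc m Hm2; have := exist_star m Hm2.
have -> : Dn m a 0 = Dn m astar 0.
  by congr (Dn _ _ _); apply: funext => i; rewrite Haa.
move=> E1 E2; apply: (mulfI (fact_neq0 m)); apply: (addIr (Dn m astar 0)).
by rewrite E1 E2.
Qed.

End Alg2.
Section Quant.
Context {K : numFieldType}.

Lemma quant_derive (f : K -> K) (z d r C : K) : 0 < r -> 0 <= C ->
  (forall h, `|h| <= r -> `|f (h + z) - f z - h * d| <= C * `|h| ^+ 2) ->
  is_derive z 1 f d.
Proof.
move=> r0 C0 Hb.
have Hcv : ((fun h => h^-1 *: ((f \o shift z) (h *: 1) - f z)) @ 0^' --> d)%classic.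
  apply/cvgrPdist_le => eps eps0.
  have e0 : 0 < eps / (C + 1) by rewrite divr_gt0 // ltr_wpDl.
  near=> h.
  have hn0 : h != 0 by near: h; exact: nbhs_dnbhs_neq.
  have hr : `|h| < r by near: h; exact: dnbhs0_lt.
  have he : `|h| < eps / (C + 1) by near: h; exact: dnbhs0_lt.
  rewrite /= /shift /= -[h *: 1]/(h * 1) mulr1.
  have -> : d - h^-1 * (f (h + z) - f z) = - h^-1 * (f (h + z) - f z - h * d).
    by field.
  rewrite normrM normrN normfV.
  have hp : 0 < `|h| by rewrite normr_gt0.
  rewrite ler_pdivrMl //.
  apply: (le_trans (Hb h (ltW hr))).
  rewrite expr2 mulrA [X in _ <= X]mulrC ler_wpM2r //.
  have := ltW he; rewrite ler_pdivlMr ?ltr_wpDl // => H.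
  apply: le_trans H; rewrite mulrC ler_wpM2l // ?normr_ge0 // lerDl //.
have Hd : derivable f z 1 by apply/cvg_ex; exists d.
by split => //; exact: cvg_lim.
Unshelve. all: by end_near.
Qed.

End Quant.
Section RealBounds.
Context {R : realType}.
Implicit Types x y t : R.

Lemma sin_le_abs t : `|sin t| <= `|t|.
Proof.
wlog t0 : t / 0 <= t.
  move=> W; case: (leP 0 t) => [/W//|/ltW t0].
  by rewrite -normrN -sinN -(normrN t); apply: W; rewrite oppr_ge0.
have [c _ Hc] := @MVT_segment R sin cos 0 t t0
  (fun x _ => is_derive_sin x) (continuous_subspaceT (@continuous_sin R)).
move: Hc; rewrite sin0 !subr0 => ->.
by rewrite normrM ler_piMl // cos_max.
Qed.

Lemma sqr_le_of_abs x y : `|x| <= `|y| -> x ^+ 2 <= y ^+ 2.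
Proof.
move=> H; rewrite -[x ^+ 2]real_normK ?num_real // -[y ^+ 2]real_normK ?num_real //.
by rewrite lerXn2r // nnegrE normr_ge0.
Qed.

Lemma one_sub_cos y : 1 - cos y = 2 * sin (y / 2) ^+ 2.
Proof.
have -> : y = (y / 2) *+ 2 by rewrite -mulr_natr divfK // pnatr_eq0.
rewrite cos_mulr2n cos2sin2 -(mulr_natr (y / 2)) mulfK ?pnatr_eq0 //.
rewrite mulr_natl; ring.
Qed.

Lemma cos_sub1_le y : `|cos y - 1| <= y ^+ 2 / 2.
Proof.
rewrite -normrN opprB one_sub_cos.
have H := sqr_le_of_abs _ _ (sin_le_abs (y / 2)).
have Hs : 0 <= sin (y / 2) ^+ 2 by rewrite sqr_ge0.
rewrite ger0_norm; last by apply: mulr_ge0.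
have -> : y ^+ 2 / 2 = 2 * (y / 2) ^+ 2 by field.
by rewrite ler_pM2l.
Qed.

Lemma sin_sub_le y : `|y| <= 1 / 2 -> `|sin y - y| <= y ^+ 2.
Proof.
wlog y0 : y / 0 <= y.
  move=> W; case: (leP 0 y) => [/W//|/ltW y0] Hy.
  have := W (- y); rewrite oppr_ge0 normrN sqrrN sinN => /(_ y0 Hy).
  by rewrite -opprD normrN.
move=> Hy.
have Hd : forall x, x \in `]0, y[ -> is_derive x 1 (fun t => sin t - t) (cos x - 1).
  move=> x _; apply: is_deriveB.
have Hc : {within `[0, y], continuous (fun t => sin t - t)}%classic.
  apply: continuous_subspaceT => x; apply: continuousB; [exact: (@continuous_sin R)|exact: cvg_id].
have [c Hc01 Hm] := @MVT_segment R _ _ 0 y y0 Hd Hc.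
move: Hm; rewrite sin0 subr0 subr0 subr0 => ->.
move: Hc01; rewrite in_itv /= => /andP[c0 cy].
have Hcb := cos_sub1_le c.
rewrite normrM (ger0_norm y0).
move: Hy; rewrite (ger0_norm y0) => Hy.
apply: (le_trans (ler_wpM2r y0 Hcb)).
have : c ^+ 2 <= y ^+ 2 by rewrite lerXn2r // nnegrE.
move=> Hc2; nra.
Qed.

Lemma exp_bounds x : `|x| <= 1 / 2 ->
  [/\ expR x <= 2, `|expR x - 1| <= 2 * `|x| & `|expR x - 1 - x| <= 2 * x ^+ 2].
Proof.
move=> Hx.
have E1 := expR_ge1Dx x.
have E2 : expR x * (1 - x) <= 1.
  have := expR_ge1Dx (- x); rewrite -(ler_pM2l (expR_gt0 x)) expRxMexpNx_1.
  by rewrite (addrC 1) addrC.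
have Ep := expR_gt0 x.
set u := expR x in E1 E2 Ep *.
have [x0|x0] := leP 0 x.
- move: Hx; rewrite (ger0_norm x0) => Hx.
  have u2 : u <= 2 by nra.
  split => //.
    by rewrite ger0_norm; nra.
  by rewrite ger0_norm; nra.
- move: Hx; rewrite (ltr0_norm x0) => Hx.
  have u1 : u <= 1 by nra.
  split; first lra.
    by rewrite ler0_norm; nra.
  by rewrite ger0_norm; nra.
Qed.

End RealBounds.
Section Cexp.
Context {R : realType}.
Local Open Scope complex_scope.

Lemma cexpD (u v : R[i]) : cexp (u + v) = cexp u * cexp v.
Proof.
case: u => a b; case: v => c d; rewrite /cexp /= expRD cosD sinD.
apply/eqP; rewrite eq_complex /=; apply/andP; split; apply/eqP; ring.
Qed.

Lemma cexp0 : cexp (0 : R[i]) = 1.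
Proof.
rewrite /cexp /= expR0 cos0 sin0.
apply/eqP; rewrite eq_complex /=; apply/andP; split; apply/eqP; ring.
Qed.

Lemma real_bound (a b : R) : a ^+ 2 + b ^+ 2 <= 1 / 4 ->
  Num.sqrt ((expR a * cos b - 1 - a) ^+ 2 + (expR a * sin b - b) ^+ 2)
  <= 4 * (a ^+ 2 + b ^+ 2).
Proof.
move=> Hab.
have Ha2 : a ^+ 2 = `|a| ^+ 2 by rewrite real_normK ?num_real.
have Hb2 : b ^+ 2 = `|b| ^+ 2 by rewrite real_normK ?num_real.
have HA : `|a| <= 1 / 2.
  have H0 := normr_ge0 a; nra.
have HB : `|b| <= 1 / 2.
  have H0 := normr_ge0 b; nra.
have [Ee1 Ee2 Ee3] := exp_bounds _ HA.
have Ep := expR_ge0 a.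
have Hc := cos_sub1_le b.
have Hs := sin_sub_le _ HB.
set X := expR a * cos b - 1 - a.
set Y := expR a * sin b - b.
have HX : `|X| <= 2 * a ^+ 2 + b ^+ 2.
  have -> : X = expR a * (cos b - 1) + (expR a - 1 - a) by rewrite /X; ring.
  apply: (le_trans (ler_normD _ _)); rewrite normrM (ger0_norm Ep).
  have : expR a * `|cos b - 1| <= 2 * (b ^+ 2 / 2).
    by apply: ler_pM => //; rewrite normr_ge0.
  lra.
have HY : `|Y| <= a ^+ 2 + 3 * b ^+ 2.
  have -> : Y = expR a * (sin b - b) + (expR a - 1) * b by rewrite /Y; ring.
  apply: (le_trans (ler_normD _ _)); rewrite normrM (ger0_norm Ep) normrM.
  have : expR a * `|sin b - b| <= 2 * b ^+ 2.
    by apply: ler_pM => //; rewrite normr_ge0.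
  have : `|expR a - 1| * `|b| <= 2 * `|a| * `|b|.
    by apply: ler_wpM2r => //; rewrite normr_ge0.
  have P3 : 2 * `|a| * `|b| <= `|a| ^+ 2 + `|b| ^+ 2.
    have := sqr_ge0 (`|a| - `|b|); rewrite sqrrB; lra.
  rewrite Ha2 Hb2 in P3 *; lra.
have HX0 := normr_ge0 X; have HY0 := normr_ge0 Y.
have HXY : X ^+ 2 + Y ^+ 2 <= (4 * (a ^+ 2 + b ^+ 2)) ^+ 2.
  rewrite -[X ^+ 2]real_normK ?num_real // -[Y ^+ 2]real_normK ?num_real //.
  have Ha0 := sqr_ge0 a; have Hb0 := sqr_ge0 b.
  nra.
apply: (le_trans (ler_wsqrtr HXY)).
by rewrite sqrtr_sqr ger0_norm // mulr_ge0 // addr_ge0 // sqr_ge0.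
Qed.

Lemma cexp_bound (h : R[i]) : `|h| <= (1 / 2)%:C ->
  `|cexp h - 1 - h| <= 4 * `|h| ^+ 2.
Proof.
case: h => a b Hh.
have -> : cexp (a +i* b) - 1 - (a +i* b) =
    (expR a * cos b - 1 - a) +i* (expR a * sin b - b).
  rewrite /cexp /=; apply/eqP; rewrite eq_complex /=; apply/andP; split; apply/eqP; ring.
rewrite normc_def /= -add_Re2_Im2 /=.
have -> : (4 : R[i]) * (a ^+ 2 + b ^+ 2)%:C = (4 * (a ^+ 2 + b ^+ 2))%:C.
  by rewrite rmorphM /= rmorph_nat.
rewrite lecR; apply: real_bound.
move: Hh; rewrite normc_def /= lecR => Hh.
have Hs0 := sqrtr_ge0 (a ^+ 2 + b ^+ 2).
have Hq : Num.sqrt (a ^+ 2 + b ^+ 2) ^+ 2 = a ^+ 2 + b ^+ 2.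
  by rewrite sqr_sqrtr // addr_ge0 // sqr_ge0.
rewrite -Hq; nra.
Qed.

End Cexp.
Section Poly.
Context {K : numFieldType}.

Lemma is_derive_horner (p : {poly K}) (x : K) :
  is_derive x 1 (horner p) p^`().[x].
Proof.
elim/poly_ind: p => [|p c IH].
  have -> : horner (0 : {poly K}) = cst 0 by apply: funext => y; rewrite horner0.
  by rewrite deriv0 horner0; exact: is_derive_cst.
have -> : horner (p * 'X + c%:P) = (horner p * id) + cst c.
  by apply: funext => y; rewrite /= !hornerE.
apply: is_derive_eq.
rewrite derivD derivC addr0 derivM derivX !hornerE /=.
change (p.[x] * 1 + x * p^`().[x] = p^`().[x] * x + p.[x]); ring.
Qed.

End Poly.

Section Fq.
Context {R : realType}.
Local Open Scope complex_scope.
Local Notation C := (Num.NumField.sort (R[i] : numFieldType)).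

Definition Ecx (z : C) : C := cexp (- z).

Lemma is_derive_Ecx (z : C) : is_derive z 1 Ecx (- Ecx z).
Proof.
apply: (@quant_derive _ _ _ _ ((1/2)%:C) (4 * `|Ecx z|)).
- by rewrite ltcR divr_gt0.
- by rewrite mulr_ge0 // ler0n.
move=> h Hh.
have -> : Ecx (h + z) - Ecx z - h * - Ecx z = Ecx z * (cexp (- h) - 1 - (- h)).
  by rewrite /Ecx opprD cexpD; ring.
have hb : `|cexp (- h) - 1 - (- h)| <= 4 * `|h| ^+ 2.
  by have := @cexp_bound R (- h); rewrite normrN; exact.
rewrite normrM; apply: le_trans (ler_wpM2l (normr_ge0 (Ecx z)) hb) _.
by rewrite mulrA (mulrC (`|Ecx z|)).
Qed.

Definition Fq (p q : {poly C}) (z : C) : C := p.[z] + Ecx z * q.[z].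
Definition Tq (q : {poly C}) := q^`() - q.

Lemma is_derive_Fq (p q : {poly C}) (z : C) : is_derive z 1 (Fq p q) (Fq p^`() (Tq q) z).
Proof.
have -> : Fq p q = horner p + Ecx * horner q by [].
have H1 := is_derive_horner p z.
have H2 := is_derive_horner q z.
have H3 := is_derive_Ecx z.
have H4 := is_deriveM H3 H2.
have H5 := is_deriveD H1 H4.
apply: (is_derive_eq H5).
rewrite /Fq /Tq hornerD hornerN.
change (p^`().[z] + (Ecx z * q^`().[z] + q.[z] * - Ecx z) =
  p^`().[z] + Ecx z * (q^`().[z] + - q.[z])).
rewrite mulrDr mulrN mulrN; congr (_ + (_ + _)); by rewrite mulrC.
Qed.

Lemma derive1_Fq (p q : {poly C}) : derive1 (Fq p q) = Fq p^`() (Tq q).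
Proof.
apply: funext => z; rewrite derive1E.
by have [_ ->] := is_derive_Fq p q z.
Qed.

Lemma derive1n_Fq k (p q : {poly C}) : derive1n k (Fq p q) = Fq (p^`(k)) (iter k Tq q).
Proof.
elim: k => [|k IH]; first by rewrite derive1n0 derivn0.
by rewrite derive1nS IH derive1_Fq derivnS.
Qed.

Lemma Fq0 (p q : {poly C}) : Fq p q 0 = p.[0] + q.[0].
Proof. by rewrite /Fq /Ecx oppr0 cexp0 mul1r. Qed.

Lemma Tq_coef k (q : {poly C}) i :
  ((iter k Tq q)^`(i)).[0] = Dn k (fun j => (q^`(j)).[0]) i.
Proof.
elim: k i => [|k IH] i; first by [].
rewrite iterS DnS -!IH /Tq derivnB -derivSn.
by rewrite hornerD hornerN.
Qed.

End Fq.
Section Main.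
Context {R : realType}.
Local Open Scope complex_scope.
Local Notation C := (Num.NumField.sort (R[i] : numFieldType)).

Lemma RC_sign m : ((-1) ^+ m : R)%:C = (-1) ^+ m :> C.
Proof. by rewrite rmorphXn rmorphN1. Qed.

Lemma RC_nat m : ((m%:R : R))%:C = m%:R :> C.
Proof. by rewrite rmorph_nat. Qed.

Lemma pstar_RC (n k : nat) : (k < n)%N ->
  ((-1) ^+ (n - k) * ((n`!)%:R / (k`!)%:R) * ('C(2 * n - k - 1, n - 1))%:R : R)%:C
  = pstar n k :> C.
Proof.
move=> Hk; rewrite /pstar Hk !rmorphM /= fmorphV /= RC_sign !RC_nat.
by [].
Qed.

Lemma beta_form (n k : nat) (x : R) : (k < n)%N ->
  ((k`!)%:R * x = (-1) ^+ (n - 1) * (n`!)%:R * ('C(2 * n - 1 - k, n))%:R) <->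
  (x = (-1) ^+ (n - 1) * ((2 * n - k - 1)`!)%:R / ((k`!)%:R * ((n - k - 1)`!)%:R)).
Proof.
move=> Hk.
have Hb : ('C(2 * n - 1 - k, n) * (n`! * (n - k - 1)`!))%N = (2 * n - k - 1)`!.
  have -> : (2 * n - k - 1 = 2 * n - 1 - k)%N by lia.
  have -> : (n - k - 1 = 2 * n - 1 - k - n)%N by lia.
  by rewrite bin_fact //; lia.
have Hf1 := @fact_neq0 R (k`!) ; have Hf2 := @fact_neq0 R (n - k - 1).
have Hk0 : (k`!)%:R != 0 :> R by rewrite pnatr_eq0 -lt0n fact_gt0.
have Hm0 : ((n - k - 1)`!)%:R != 0 :> R by rewrite pnatr_eq0 -lt0n fact_gt0.
rewrite -Hb !natrM.
split => H.
- apply: (mulfI Hk0); rewrite H; field; by rewrite Hm0 Hk0.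
- rewrite H; field; by rewrite Hm0 Hk0.
Qed.

End Main.
Section Final.
Context {R : realType}.
Local Open Scope complex_scope.
Local Notation C := (Num.NumField.sort (R[i] : numFieldType)).

Variables (n : nat) (b beta : nat -> R).
Hypothesis n_gt0 : (0 < n)%N.

Let P : {poly C} := \poly_(i < n.+1) (if (i < n)%N then (b i)%:C else 1).
Let Q : {poly C} := \poly_(i < n) (beta i)%:C.
Let pm (m : nat) : C := P`_m.
Let a (j : nat) : C := (j`!)%:R * Q`_j.

Lemma Deltat_Fq : (Deltat n b beta : C -> C) = Fq P Q.
Proof.
apply: funext => z; rewrite /Deltat /Fq /Ecx /P /Q !horner_poly big_ord_recr /=.
rewrite ltnn mul1r.
have -> : \sum_(i < n) (if (i < n)%N then (b i)%:C else 1) * z ^+ i =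
          \sum_(k < n) (b k)%:C * z ^+ k.
  by apply: eq_bigr => i _; rewrite ltn_ord.
by rewrite addrC.
Qed.

Lemma cond_eq k : derive1n k (Deltat n b beta : C -> C) 0 = (k`!)%:R * pm k + Dn k a 0.
Proof.
rewrite Deltat_Fq derive1n_Fq Fq0.
rewrite -[(iter k Tq Q).[0]]/(((iter k Tq Q)^`(0)).[0]) Tq_coef.
congr (_ + _).
  rewrite horner_coef0 coef_derivn addn0 ffactnn; exact: (esym (mulr_natl _ _)).
have -> : (fun j => (Q^`(j)).[0]) = a.
  apply: funext => j.
  rewrite /a horner_coef0 coef_derivn addn0 ffactnn; exact: (esym (mulr_natl _ _)).
by [].
Qed.

Lemma a_supp i : (n <= i)%N -> a i = 0.
Proof. by move=> Hi; rewrite /a /Q coef_poly ltnNge Hi mulr0. Qed.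

Lemma pm_ge m : (n <= m)%N -> pm m = pstar n m.
Proof.
move=> Hm; rewrite /pm /P /pstar coef_poly.
case: (ltngtP m n) => Hmn.
- by rewrite ltnNge Hm in Hmn.
- have -> : (m < n.+1)%N = false by lia.
  by [].
- by rewrite Hmn ltnSn.
Qed.

Lemma pm_lt m : (m < n)%N -> pm m = (b m)%:C.
Proof. by move=> Hm; rewrite /pm /P coef_poly ltnS (ltnW Hm) Hm. Qed.

Lemma a_lt i : (i < n)%N -> a i = ((i`!)%:R * beta i)%:C.
Proof. by move=> Hi; rewrite /a /Q coef_poly Hi rmorphM /= RC_nat. Qed.

Lemma astar_RC i : astar n i =
  ((-1) ^+ (n - 1) * (n`!)%:R * ('C(2 * n - 1 - i, n))%:R : R)%:C.
Proof. by rewrite /astar !rmorphM /= RC_sign !RC_nat. Qed.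

Lemma final_equiv :
  (forall k, (k < 2 * n)%N -> derive1n k (Deltat n b beta : C -> C) 0 = 0) <->
  (forall k : nat, (k < n)%N ->
      b k = (-1) ^+ (n - k) * ((n`!)%:R / (k`!)%:R) * ('C(2 * n - k - 1, n - 1))%:R
      /\ beta k = (-1) ^+ (n - 1) * ((2 * n - k - 1)`!)%:R
                  / ((k`!)%:R * ((n - k - 1)`!)%:R)).
Proof.
split.
- move=> H.
  have Hc : forall m, (m < 2 * n)%N -> (m`!)%:R * pm m + Dn m a 0 = 0.
    by move=> m Hm; rewrite -cond_eq H.
  have [Haa Hpp] := @uniq_star _ n n_gt0 pm a a_supp pm_ge Hc.
  move=> k Hk; split.
  + apply: complexI; rewrite pstar_RC // -pm_lt //; exact: Hpp.
  + apply/(beta_form _ _ _ Hk); apply: complexI.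
    by rewrite -a_lt // -astar_RC Haa.
- move=> H k Hk; rewrite cond_eq.
  have Ea : a = astar n.
    apply: funext => i; case: (ltnP i n) => Hi.
      rewrite a_lt // astar_RC; congr (_%:C).
      by apply/(beta_form _ _ _ Hi); have [_ ->] := H i Hi.
    by rewrite a_supp // astar_supp.
  have Ep : pm k = pstar n k.
    case: (ltnP k n) => Hkn; last exact: pm_ge.
    by rewrite pm_lt // -pstar_RC //; have [-> _] := H k Hkn.
  by rewrite Ea Ep; exact: exist_star.
Qed.

End Final.

Theorem lemma4p3 (R : realType) (n : nat) (b beta : nat -> R) :
  (0 < n)%N ->
  (root_of_mult (K := R[i]) (Deltat n b beta) 0 (2 * n) <->
   (forall k : nat, (k < n)%N ->
      b k = (-1) ^+ (n - k) * ((n`!)%:R / (k`!)%:R) * ('C(2 * n - k - 1, n - 1))%:R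
      /\ beta k = (-1) ^+ (n - 1) * ((2 * n - k - 1)`!)%:R
                  / ((k`!)%:R * ((n - k - 1)`!)%:R))).
Proof.
move=> Hn; rewrite /root_of_mult.
exact: (final_equiv n b beta Hn).
Qed.
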